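(* Let $p\ge 3$ be a prime, $m,k\ge1$ integers, and $t,u\in\mathbb{Z}_p$ with $u\neq 0$ and $t^2\equiv u\pmod p$. Let $G$ be the set of all $m\times k$ matrices over $\mathbb{Z}_p$ with the operation $[a_{ij}]*[b_{ij}]=[(t a_{ij}+u b_{ij})\bmod p]$. Then $(G,* )$ is a $T^3$-AG-groupoid.
   Context: An AG-groupoid is a set with a binary operation satisfying $(a*b)*c=(c*b)*a$ for all $a,b,c$ (the condition $t^2\equiv u$ ensures $G$ is one). An AG-groupoid $G$ is a $T_l^3$-AG-groupoid if for all $a,b,c\in G$, $a*b=a*c$ implies $b*a=c*a$; a $T_r^3$-AG-groupoid if $b*a=c*a$ implies $a*b=a*c$; and a $T^3$-AG-groupoid if it is both. *)

(* Defs.v *)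
From mathcomp Require Import all_boot all_algebra.
Set Implicit Arguments. Unset Strict Implicit. Unset Printing Implicit Defensive.
Import GRing.Theory.
Local Open Scope ring_scope.

Definition AG_groupoid (G : Type) (op : G -> G -> G) : Prop :=
  forall a b c : G, op (op a b) c = op (op c b) a.

Definition T3l_AG_groupoid (G : Type) (op : G -> G -> G) : Prop :=
  AG_groupoid op /\ forall a b c : G, op a b = op a c -> op b a = op c a.

Definition T3r_AG_groupoid (G : Type) (op : G -> G -> G) : Prop :=
  AG_groupoid op /\ forall a b c : G, op b a = op c a -> op a b = op a c.

Definition T3_AG_groupoid (G : Type) (op : G -> G -> G) : Prop :=
  T3l_AG_groupoid op /\ T3r_AG_groupoid op.

Definition mat_op (p m k : nat) (t u : 'F_p) (A B : 'M['F_p]_(m, k)) : 'M['F_p]_(m, k) :=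
  \matrix_(i, j) (t * A i j + u * B i j).

(* Main.v *)
Require Import Defs.
From mathcomp Require Import all_boot all_algebra.
Local Open Scope ring_scope.
Import GRing.Theory.
From mathcomp Require Import ring.

Theorem mainTheorem5 (p m k : nat) (t u : 'F_p) :
  prime p -> (3 <= p)%N -> (1 <= m)%N -> (1 <= k)%N ->
  u != 0 -> t ^+ 2 = u ->
  T3_AG_groupoid (@mat_op p m k t u).
Proof.
move=> _ _ _ _ u0 tu.
have t0 : t != 0 by apply: contraNneq u0 => t0; rewrite -tu t0 expr0n.
have ag : AG_groupoid (@mat_op p m k t u).
  move=> a b c; apply/matrixP => i j; rewrite !mxE -tu expr2.
  ring.
have cancel1 (s : 'F_p) (x y z : 'M['F_p]_(m, k)) : s != 0 ->
    (forall i j, s * x i j + z i j = s * y i j + z i j) -> x = y.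
  move=> s0 H; apply/matrixP => i j; have := H i j.
  by move/addIr/(mulfI s0).
split; split => // a b c /matrixP H.
- suff -> : b = c by []. apply: (cancel1 u b c (t *: a)) => // i j.
  by have := H i j; rewrite !mxE addrC => ->; rewrite addrC.
- suff -> : b = c by []. apply: (cancel1 t b c (u *: a)) => // i j.
  by have := H i j; rewrite !mxE.
Qed.
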